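(* Let $C$ be the set of numbers $\sum_{n\ge1}c_n10^{-n}$ with all $c_n\in\{0,1\}$, and $D$ the set of numbers $\sum_{n\ge1}d_n10^{-n}$ with all $d_n\in\{0,2\}$. Then there is no set $E\subset C$ of positive Hausdorff dimension together with $a\in\mathbb{R}$ such that $E+a\subset D$. *)

(* Defs.v *)
From Stdlib Require Import Reals.
Open Scope R_scope.

(* r^s for r >= 0 and s > 0, with the convention 0^s = 0. *)
Definition rpow (r s : R) : R := if Rle_dec r 0 then 0 else Rpower r s.

(* C = { sum_{n>=1} c_n 10^{-n} : c_n in {0,1} }  (term index n here = paper's n+1) *)
Definition setC (x : R) : Prop :=
  exists c : nat -> R, (forall n, c n = 0 \/ c n = 1) /\
    infinite_sum (fun n => c n / 10 ^ (S n)) x.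

Definition setD (x : R) : Prop :=
  exists d : nat -> R, (forall n, d n = 0 \/ d n = 2) /\
    infinite_sum (fun n => d n / 10 ^ (S n)) x.

(* H^s(E) = 0, with H^s = sup_{delta>0} H^s_delta and
   H^s_delta(E) = inf { sum_i diam(U_i)^s : E ⊆ ∪ U_i, diam U_i <= delta }. *)
Definition hausdorff_null (s : R) (E : R -> Prop) : Prop :=
  forall delta eps : R, 0 < delta -> 0 < eps ->
    exists (U : nat -> R -> Prop) (r : nat -> R),
      (forall x, E x -> exists i, U i x) /\
      (forall i, 0 <= r i <= delta) /\
      (forall i x y, U i x -> U i y -> Rabs (x - y) <= r i) /\
      (forall N, sum_f_R0 (fun i => rpow (r i) s) N <= eps).

Definition is_hausdorff_dim (E : R -> Prop) (d : R) : Prop :=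
  (forall s, 0 < s -> hausdorff_null s E -> d <= s) /\
  (forall b, (forall s, 0 < s -> hausdorff_null s E -> b <= s) -> b <= d).

(* Main.v *)
Require Import Defs.
From Stdlib Require Import Reals Lra Lia.
From Coquelicot Require Import Coquelicot.
Open Scope R_scope.

Lemma psum_bound (b : nat -> R) :
  (forall n, Rabs (b n) <= 3 / 10 ^ (n + 2)) ->
  forall N, Rabs (sum_n b N) <= 1/30 - 1/(30 * 10 ^ (N+1)).
Proof.
  intros Hb N; induction N as [|N IH].
  - rewrite sum_O. specialize (Hb 0%nat). simpl in *. lra.
  - rewrite sum_Sn. specialize (Hb (S N)).
    assert (Hp : 0 < 10 ^ (N+1)) by (apply pow_lt; lra).
    replace (S N + 2)%nat with (S (S (N+1))) in Hb by lia.
    replace (S N + 1)%nat with (S (N+1)) by lia.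
    simpl pow in *.
    set (p := 10 ^ (N+1)) in *.
    change (plus (sum_n b N) (b (S N))) with (sum_n b N + b (S N)).
    eapply Rle_trans; [apply Rabs_triang|].
    assert (E1 : 3 / (10 * (10 * p)) = 1/(30*p) - 1/(30*(10*p))) by (field; lra).
    lra.
Qed.

Lemma series_bound (b : nat -> R) (l : R) :
  (forall n, Rabs (b n) <= 3 / 10 ^ (n + 2)) -> is_series b l -> Rabs l <= 1/30.
Proof.
  intros Hb Hs.
  assert (Hl : is_lim_seq (sum_n b) l) by exact Hs.
  apply is_lim_seq_abs in Hl.
  assert (H := is_lim_seq_le _ _ _ _ (fun N => Rle_trans _ _ _ (psum_bound b Hb N)
      (ltac:(assert (0 < 10 ^ (N+1)) by (apply pow_lt; lra);
             assert (0 < 1/(30 * 10^(N+1))) by (apply Rdiv_lt_0_compat; lra); lra)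
        : 1/30 - 1/(30 * 10 ^ (N+1)) <= 1/30)) Hl (is_lim_seq_const (1/30))).
  exact H.
Qed.

Lemma first_digit (g : nat -> R) :
  (forall n, g n = 0 \/ 1 <= Rabs (g n) <= 3) ->
  is_series (fun n => g n / 10 ^ (S n)) 0 -> g 0%nat = 0.
Proof.
  intros Hg Hs.
  assert (H1 : is_series (fun k => g (S k) / 10 ^ (S (S k))) (- (g 0%nat / 10))).
  { apply (is_series_incr_1 (fun n => g n / 10 ^ (S n))).
    match goal with |- is_series _ ?L => replace L with 0; [exact Hs|] end.
    change plus with Rplus. simpl. field. }
  apply series_bound in H1.
  - rewrite Rabs_Ropp in H1. unfold Rdiv in H1. rewrite Rabs_mult in H1.
    rewrite (Rabs_right (/10)) in H1 by lra.
    destruct (Hg 0%nat) as [h|h]; [exact h|lra].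
  - intros n. unfold Rdiv. rewrite Rabs_mult.
    assert (Hp : 0 < 10 ^ (n+2)) by (apply pow_lt; lra).
    replace (S (S n)) with (n+2)%nat by lia.
    rewrite (Rabs_right (/ 10 ^ (n+2))) by (apply Rle_ge, Rlt_le, Rinv_0_lt_compat; lra).
    apply Rmult_le_compat_r; [apply Rlt_le, Rinv_0_lt_compat; lra|].
    destruct (Hg (S n)) as [h|h]; [rewrite h, Rabs_R0; lra|lra].
Qed.

Lemma all_digits (k : nat) : forall (g : nat -> R),
  (forall n, g n = 0 \/ 1 <= Rabs (g n) <= 3) ->
  is_series (fun n => g n / 10 ^ (S n)) 0 -> g k = 0.
Proof.
  induction k as [|k IH]; intros g Hg Hs.
  - exact (first_digit g Hg Hs).
  - assert (H0 := first_digit g Hg Hs).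
    apply (IH (fun n => g (S n))); [intros; apply Hg|].
    assert (H1 : is_series (fun k => g (S k) / 10 ^ (S (S k))) 0).
    { apply (is_series_incr_1 (fun n => g n / 10 ^ (S n))).
      match goal with |- is_series _ ?L => replace L with 0; [exact Hs|] end.
      change plus with Rplus. rewrite H0. simpl. field. }
    apply (is_series_scal 10) in H1.
    match type of H1 with is_series _ ?L => replace L with 0 in H1 by (change scal with Rmult; simpl; ring) end.
    eapply is_series_ext; [|exact H1].
    intros n; change scal with Rmult; simpl. field.
    apply pow_nonzero; lra.
Qed.

Lemma digit_cases (c c' d d' : R) :
  (c = 0 \/ c = 1) -> (c' = 0 \/ c' = 1) -> (d = 0 \/ d = 2) -> (d' = 0 \/ d' = 2) ->
  let g := (c - d) - (c' - d') in
  (g = 0 \/ 1 <= Rabs g <= 3) /\ (g = 0 -> c = c').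
Proof.
  intros Hc Hc' Hd Hd' g; unfold g.
  destruct Hc as [->| ->]; destruct Hc' as [->| ->]; destruct Hd as [->| ->];
  destruct Hd' as [->| ->];
  split; try (intros; lra);
  first [left; lra | right; unfold Rabs; destruct Rcase_abs; lra].
Qed.

Lemma unique_point (E : R -> Prop) (a : R) :
  (forall x, E x -> setC x) -> (forall x, E x -> setD (x + a)) ->
  forall x y, E x -> E y -> x = y.
Proof.
  intros HC HD x y Ex Ey.
  destruct (HC x Ex) as [c [Hc Sc]].
  destruct (HC y Ey) as [c' [Hc' Sc']].
  destruct (HD x Ex) as [d [Hd Sd]].
  destruct (HD y Ey) as [d' [Hd' Sd']].
  apply is_series_Reals in Sc, Sc', Sd, Sd'.
  set (g := fun n => (c n - d n) - (c' n - d' n)).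
  assert (Hs : is_series (fun n => g n / 10 ^ (S n)) 0).
  { assert (H := is_series_minus _ _ _ _ (is_series_minus _ _ _ _ Sc Sd)
                   (is_series_minus _ _ _ _ Sc' Sd')).
    match type of H with is_series _ ?L => replace L with 0 in H
      by (cbn; ring) end.
    eapply is_series_ext; [|exact H].
    intros n; unfold g; cbn; field.
    apply pow_nonzero; lra. }
  assert (Hcc : forall n, c n = c' n).
  { intros n. destruct (digit_cases (c n) (c' n) (d n) (d' n) (Hc n) (Hc' n) (Hd n) (Hd' n))
      as [_ Hn].
    apply Hn. apply (all_digits n g); [|exact Hs].
    intros m. exact (proj1 (digit_cases _ _ _ _ (Hc m) (Hc' m) (Hd m) (Hd' m))). }
  apply is_series_unique in Sc, Sc'.
  rewrite <- Sc, <- Sc'. apply Series_ext. intros n; rewrite Hcc; reflexivity.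
Qed.

Theorem mainTheorem5 :
  ~ (exists (E : R -> Prop) (a d : R),
        (forall x, E x -> setC x) /\
        is_hausdorff_dim E d /\ 0 < d /\
        (forall x, E x -> setD (x + a))).
Proof.
  intros [E [a [d [HC [[Hdim _] [Hd HD]]]]]].
  assert (Hu := unique_point E a HC HD).
  assert (Hn : hausdorff_null (d/2) E).
  { intros delta eps Hdel Heps.
    exists (fun _ => E), (fun _ => 0). split; [|split; [|split]].
    - intros x Ex; exists 0%nat; exact Ex.
    - intros; lra.
    - intros i x y Ex Ey. rewrite (Hu x y Ex Ey). unfold Rminus; rewrite Rplus_opp_r, Rabs_R0; lra.
    - intros N. assert (Hz : forall M, sum_f_R0 (fun i => rpow 0 (d/2)) M = 0).
      { unfold rpow; destruct (Rle_dec 0 0) as [_|h]; [|lra].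
        induction M; simpl; [reflexivity|rewrite IHM; ring]. }
      rewrite Hz; lra. }
  specialize (Hdim (d/2) ltac:(lra) Hn). lra.
Qed.
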